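(* Let $0\le E^C_1\le E^C_2\le\cdots$ be a non-decreasing sequence of nonnegative reals with $\lim_{n\to\infty}E^C_n=\infty$, let $\beta>0$, $\gamma=e^{-\beta}\in(0,1)$, and let $E\ge E^C_1$. Let $$\varepsilon_C=\inf\Big\{\sum_{j=1}^\infty\omega_je^{-\beta E^C_j}\ :\ \omega_j\ge0\ \forall j,\ \sum_{j=1}^\infty\omega_j=1,\ \sum_{j=1}^\infty E^C_j\omega_j\le E\Big\}.$$ For $0<W<1$ let $j(W)=\min\{j\ge1: E^C_{j+1}>E/(1-W)\}$. Then $$\varepsilon_C\ \ge\ \sup_{W\in(0,1)} W\,\gamma^{E^C_{j(W)}}>0.$$ *)

(* Defs.v *)
(* classical reals. Sequences are indexed from 1 as in the paper;
   the value at index 0 of any nat -> R sequence is ignored. *)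
From Stdlib Require Import Reals.
Open Scope R_scope.

Definition is_glb (S : R -> Prop) (m : R) : Prop :=
  (forall x, S x -> m <= x) /\ (forall m', (forall x, S x -> m' <= x) -> m' <= m).

Definition feasible_values (Ec : nat -> R) (beta E : R) (v : R) : Prop :=
  exists w : nat -> R,
    (forall j, (1 <= j)%nat -> 0 <= w j) /\
    infinite_sum (fun n => w (S n)) 1 /\
    (exists s, infinite_sum (fun n => Ec (S n) * w (S n)) s /\ s <= E) /\
    infinite_sum (fun n => w (S n) * exp (- beta * Ec (S n))) v.

Definition is_jW (Ec : nat -> R) (E W : R) (j : nat) : Prop :=
  (1 <= j)%nat /\ Ec (S j) > E / (1 - W) /\
  (forall k, (1 <= k)%nat -> Ec (S k) > E / (1 - W) -> (j <= k)%nat).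

Definition lower_values (Ec : nat -> R) (beta E : R) (y : R) : Prop :=
  exists W j, 0 < W < 1 /\ is_jW Ec E W j /\
    y = W * Rpower (exp (- beta)) (Ec j).

(* Main.v *)
Require Import Defs.
From Stdlib Require Import Reals Lra Lia Classical Wf_nat.
Open Scope R_scope.

Lemma cv_const (c : R) : Un_cv (fun _ => c) c.
Proof. intros e He. exists 0%nat. intros n _. unfold R_dist. rewrite Rminus_diag, Rabs_R0. lra. Qed.

Lemma exp_le' (x y : R) : x <= y -> exp x <= exp y.
Proof. intros [H|H]; [left; apply exp_increasing; exact H | subst; lra]. Qed.

Lemma mono_gen (Ec : nat -> R)
  (Hmono : forall n, (1 <= n)%nat -> Ec n <= Ec (S n)) :
  forall k m, (1 <= k)%nat -> (k <= m)%nat -> Ec k <= Ec m.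
Proof.
  intros k m Hk Hkm. induction Hkm. lra.
  apply Rle_trans with (Ec m). apply IHHkm. apply Hmono. lia.
Qed.

Lemma key (Ec : nat -> R) (beta E : R)
  (Hnonneg : forall n, (1 <= n)%nat -> 0 <= Ec n)
  (Hmono : forall n, (1 <= n)%nat -> Ec n <= Ec (S n))
  (Hbeta : 0 < beta)
  (HE : Ec 1%nat <= E) W j v :
  0 < W < 1 -> is_jW Ec E W j -> feasible_values Ec beta E v ->
  W * exp (- beta * Ec j) <= v.
Proof.
  intros HW [Hj1 [Hjc _]] [w [Hw [Hs1 [[s [Hs HsE]] Hv]]]].
  assert (HE0 : 0 <= E) by (pose proof (Hnonneg 1%nat (le_n _)); lra).
  set (c := Ec (S j)) in *.
  assert (HA : 0 <= E / (1 - W)) by (unfold Rdiv; apply Rmult_le_pos; [lra | left; apply Rinv_0_lt_compat; lra]).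
  assert (Hc : 0 < c) by lra.
  assert (HcE : E < (1 - W) * c).
  { apply Rmult_lt_compat_l with (r := 1 - W) in Hjc; [|lra].
    unfold Rdiv in Hjc. rewrite (Rmult_comm E), <- Rmult_assoc, Rinv_r in Hjc; lra. }
  set (g := exp (- beta * Ec j)).
  assert (Hg : 0 < g) by apply exp_pos.
  assert (Hpt : forall n, g * (w (S n) - / c * (Ec (S n) * w (S n))) <=
                          w (S n) * exp (- beta * Ec (S n))).
  { intro n. pose proof (Hw (S n) ltac:(lia)) as Hwn.
    pose proof (Rinv_0_lt_compat c Hc) as Hic.
    destruct (Compare_dec.le_lt_dec (S n) j) as [Hle|Hgt].
    - assert (Hexp : g <= exp (- beta * Ec (S n))).
      { unfold g. apply exp_le'. pose proof (mono_gen Ec Hmono (S n) j ltac:(lia) Hle). nra. }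
      pose proof (Hnonneg (S n) ltac:(lia)). 
      assert (0 <= / c * (Ec (S n) * w (S n))) by (apply Rmult_le_pos; [lra| nra]).
      nra.
    - assert (HcS : c <= Ec (S n)) by (apply mono_gen; auto; lia).
      assert (H1 : w (S n) - / c * (Ec (S n) * w (S n)) <= 0).
      { assert (/ c * Ec (S n) >= 1).
        { apply Rmult_le_compat_l with (r := / c) in HcS; [|lra].
          rewrite Rinv_l in HcS; lra. }
        nra. }
      pose proof (exp_pos (- beta * Ec (S n))). nra. }
  assert (Hcv : Un_cv (fun N => g * (sum_f_R0 (fun n => w (S n)) N -
                 / c * sum_f_R0 (fun n => Ec (S n) * w (S n)) N)) (g * (1 - / c * s))).
  { apply CV_mult. apply cv_const. apply CV_minus. exact Hs1.
    apply CV_mult. apply cv_const. exact Hs. }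
  assert (Hle : g * (1 - / c * s) <= v).
  { eapply Rle_cv_lim; [| exact Hcv | exact Hv]. intro N. induction N; simpl.
    - specialize (Hpt 0%nat). nra.
    - specialize (Hpt (S N)).
      replace (g * (sum_f_R0 (fun n : nat => w (S n)) N + w (S (S N)) -
         / c * (sum_f_R0 (fun n : nat => Ec (S n) * w (S n)) N + Ec (S (S N)) * w (S (S N)))))
      with (g * (sum_f_R0 (fun n : nat => w (S n)) N -
         / c * sum_f_R0 (fun n : nat => Ec (S n) * w (S n)) N) +
            g * (w (S (S N)) - / c * (Ec (S (S N)) * w (S (S N))))) by ring.
      lra. }
  assert (/ c * s < 1 - W).
  { apply Rle_lt_trans with (/ c * E).
    apply Rmult_le_compat_l; [left; apply Rinv_0_lt_compat; lra | lra].
    apply Rmult_lt_compat_l with (r := / c) in HcE; [|apply Rinv_0_lt_compat; lra].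
    rewrite (Rmult_comm (1 - W)), <- Rmult_assoc, Rinv_l in HcE; lra. }
  nra.
Qed.

Theorem mainTheorem7 (Ec : nat -> R) (beta E : R)
  (Hnonneg : forall n, (1 <= n)%nat -> 0 <= Ec n)
  (Hmono : forall n, (1 <= n)%nat -> Ec n <= Ec (S n))
  (Hlim : cv_infty Ec)
  (Hbeta : 0 < beta)
  (HE : Ec 1%nat <= E) :
  forall epsC, is_glb (feasible_values Ec beta E) epsC ->
  exists s, is_lub (lower_values Ec beta E) s /\ s <= epsC /\ 0 < s.
Proof.
  intros epsC [Hglb1 Hglb2].
  assert (Hrp : forall x, Rpower (exp (- beta)) x = exp (- beta * x)).
  { intro x. unfold Rpower. rewrite ln_exp. f_equal; ring. }
  set (A := E / (1 - /2)).
  destruct (Hlim A) as [N HN].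
  assert (Hex : exists k, (1 <= k)%nat /\ Ec (S k) > A).
  { exists (S N). split. lia. apply HN. lia. }
  destruct (dec_inh_nat_subset_has_unique_least_element _
             (fun n => classic _) Hex) as [j0 [[Hj0 Hjmin] _]].
  assert (HjW : is_jW Ec E (/2) j0).
  { destruct Hj0 as [Hj01 Hj02]. split; [exact Hj01|]. split; [exact Hj02|].
    intros k Hk Hk2. apply Hjmin. split; assumption. }
  assert (Hmem : lower_values Ec beta E (/2 * exp (- beta * Ec j0))).
  { exists (/2), j0. split; [lra|]. split; [exact HjW|]. rewrite Hrp. reflexivity. }
  assert (Hbnd : bound (lower_values Ec beta E)).
  { exists 1. intros y [W [j [HW [[Hj1 _] ->]]]]. rewrite Hrp.
    assert (exp (- beta * Ec j) <= 1).
    { rewrite <- exp_0. apply exp_le'. pose proof (Hnonneg j Hj1). nra. }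
    pose proof (exp_pos (- beta * Ec j)). nra. }
  destruct (completeness _ Hbnd (ex_intro _ _ Hmem)) as [s Hs].
  exists s. split; [exact Hs|]. split.
  - apply (proj2 Hs). intros y [W [j [HW [Hj ->]]]]. rewrite Hrp.
    apply Hglb2. intros v Hv. eapply key; eauto.
  - apply Rlt_le_trans with (/2 * exp (- beta * Ec j0)).
    pose proof (exp_pos (- beta * Ec j0)). nra.
    apply (proj1 Hs). exact Hmem.
Qed.
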